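(* For every $1\le i\le k$ and every set $S\subseteq V_i$, the reduction procedure on $\mathbf{T}_i$ with input $S$ is well-defined: in Step 1 and in Step 2 no vertex of the current syndrome set is paired with more than one other vertex, and in Step 3 no vertex is shifted more than once. Moreover its output $\hat{\mathbf{e}}_i$ satisfies $S\,\triangle\,\sigma(\hat{\mathbf{e}}_i)\subseteq V_{i-1}$.
   Context: Fix $k\ge1$. Let $\mathbf{T}_k=(V_k,E_k)$ be the Cayley graph of $\mathbb{Z}/2^k\mathbb{Z}\times\mathbb{Z}/2^k\mathbb{Z}$ with generators $(\pm1,0),(0,\pm1)$. For $\hat{\mathbf{e}}\in\mathbb{F}_2^{E_k}$, $\sigma(\hat{\mathbf{e}})$ is the set of vertices incident to an odd number of edges of $\hat{\mathbf{e}}$. For $0\le i\le k$ let $h_i=2^{k-i}$, let $V_i$ be the subgroup generated by $(h_i,0),(0,h_i)$, and let $\mathbf{T}_i$ be the graph on $V_i$ joining vertices differing by $\pm h_i$ in exactly one coordinate; each edge of $\mathbf{T}_i$ is identified with the straight path of length $h_i$ in $\mathbf{T}_k$, and flipping an edge of $\mathbf{T}_i$ means adding (mod 2) all edges of that path to $\hat{\mathbf{e}}_i$. For $i\ge1$, a cell of $\mathbf{T}_i$ is a face: with $h=h_i$, vertices $\alpha=(x,y)$, $\beta=(x+h,y)$, $\gamma=(x,y-h)$, $\delta=(x+h,y-h)$ and edges $t=\alpha\beta$, $b=\gamma\delta$, $l=\alpha\gamma$, $r=\beta\delta$. A block of $\mathbf{T}_i$ is a square of side $2h$ with top-left corner in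 $V_{i-1}$ (a face of $\mathbf{T}_{i-1}$), made of four cells $A$ (top-left), $B$ (top-right), $C$ (bottom-left), $D$ (bottom-right). Reduction procedure on $\mathbf{T}_i$ (input $S\subseteq V_i$, output $\hat{\mathbf{e}}_i$ initially $0$; in each step the tests use $S$ as at the start of that step, all blocks simultaneously). Step 1: in the $D$ cell of every block, if $\alpha,\delta\in S$ flip $l,b$ (pairing $\alpha$ with $\delta$); if $\beta,\gamma\in S$ flip $b,r$ (pairing $\beta$ with $\gamma$); if all four are in $S$ only $l$ and $r$ are flipped; then remove paired vertices from $S$. Step 2: in the $C$ cell of every block, if $\alpha,\gamma\in S$ flip $l$, if $\beta,\delta\in S$ flip $r$; in the $B$ cell of every block, if $\alpha,\beta\in S$ flip $t$, if $\gamma,\delta\in S$ flip $b$ (each such instruction pairs the two vertices); then remove paired vertices from $S$. Step 3: in the $A$ cell of every block, if $\beta\in S$ flip $t$, if $\gamma\in S$ flip $l$, if $\delta\in S$ flip $l$ and $b$ (each shifting that vertex to $\alpha$). *)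

(* Defs.v *)
From mathcomp Require Import all_boot all_algebra.
Set Implicit Arguments. Unset Strict Implicit. Unset Printing Implicit Defensive.
Import GRing.Theory.

(* Vertices of T_k: Z/2^k x Z/2^k  (k >= 1 is assumed wherever used). *)
Notation Vtx k := ('Z_(2^k) * 'Z_(2^k))%type.
(* Edges of T_k: (v,false) is the edge v -- v+(1,0); (v,true) is v -- v+(0,1). *)
Notation Edge k := (Vtx k * bool)%type.

Local Open Scope ring_scope.

Definition off k (v : Vtx k) (dx dy : int) : Vtx k := (v.1 + dx%:~R, v.2 + dy%:~R).

Definition hh (k i : nat) : nat := (2 ^ (k - i))%N.

Definition Vset k i : {set Vtx k} :=
  [set (((a * hh k i)%N%:R, (b * hh k i)%N%:R) : Vtx k) | a : 'I_(2^k), b : 'I_(2^k)].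

Definition ends2 k (e : Edge k) : Vtx k := if e.2 then off e.1 0 1 else off e.1 1 0.
Definition incident k (v : Vtx k) (e : Edge k) : bool := (e.1 == v) || (ends2 e == v).

Definition sigma k (e : {set Edge k}) : {set Vtx k} :=
  [set v | odd #|[set ed in e | incident v ed]|].

Definition symd (T : finType) (A B : {set T}) : {set T} := (A :\: B) :|: (B :\: A).

Definition hpath k (p : Vtx k) (len : nat) : {set Edge k} :=
  [set (off p (j : nat)%:Z 0, false) | j : 'I_len].
Definition vpath k (p : Vtx k) (len : nat) : {set Edge k} :=
  [set (off p 0 (j : nat)%:Z, true) | j : 'I_len].

Section Procedure.
Variables (k i : nat).
Let h : int := (hh k i)%:Z.

(* corners of a cell with top-left corner a *)
Definition c_al (a : Vtx k) : Vtx k := a.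
Definition c_be (a : Vtx k) : Vtx k := off a h 0.
Definition c_ga (a : Vtx k) : Vtx k := off a 0 (- h).
Definition c_de (a : Vtx k) : Vtx k := off a h (- h).
Definition e_t (a : Vtx k) := hpath (c_al a) (hh k i).
Definition e_b (a : Vtx k) := hpath (c_ga a) (hh k i).
Definition e_l (a : Vtx k) := vpath (c_ga a) (hh k i).
Definition e_r (a : Vtx k) := vpath (c_de a) (hh k i).

Definition cellA (c : Vtx k) := c.
Definition cellB (c : Vtx k) := off c h 0.
Definition cellC (c : Vtx k) := off c 0 (- h).
Definition cellD (c : Vtx k) := off c h (- h).

(* blocks: top-left corners in V_{i-1} *)
Definition blocks : seq (Vtx k) := enum (Vset k (i - 1)).

Definition step1_pairs (S : {set Vtx k}) (c : Vtx k) : seq (Vtx k * Vtx k) :=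
  let a := cellD c in
  (if (c_al a \in S) && (c_de a \in S) then [:: (c_al a, c_de a)] else [::]) ++
  (if (c_be a \in S) && (c_ga a \in S) then [:: (c_be a, c_ga a)] else [::]).

Definition step1_flips (S : {set Vtx k}) (c : Vtx k) : seq {set Edge k} :=
  let a := cellD c in
  let ad := (c_al a \in S) && (c_de a \in S) in
  let bg := (c_be a \in S) && (c_ga a \in S) in
  if ad && bg then [:: e_l a; e_r a]
  else if ad then [:: e_l a; e_b a]
  else if bg then [:: e_b a; e_r a]
  else [::].

Definition pairs1 S := flatten [seq step1_pairs S c | c <- blocks].

Definition in_pairs (ps : seq (Vtx k * Vtx k)) (v : Vtx k) : bool :=
  has (fun p => (p.1 == v) || (p.2 == v)) ps.

Definition paired_in (ps : seq (Vtx k * Vtx k)) (u v : Vtx k) : bool :=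
  ((u, v) \in ps) || ((v, u) \in ps).

Definition S1 S : {set Vtx k} := S :\: [set v | in_pairs (pairs1 S) v].

Definition step2_instr (S : {set Vtx k}) (c : Vtx k)
  : seq ((Vtx k * Vtx k) * {set Edge k}) :=
  let a := cellC c in let b := cellB c in
  [seq ins <- [:: ((c_al a, c_ga a), e_l a); ((c_be a, c_de a), e_r a);
                  ((c_al b, c_be b), e_t b); ((c_ga b, c_de b), e_b b)]
     | (ins.1.1 \in S) && (ins.1.2 \in S)].

Definition instr2 S := flatten [seq step2_instr (S1 S) c | c <- blocks].
Definition pairs2 S := [seq ins.1 | ins <- instr2 S].
Definition S2 S : {set Vtx k} := S1 S :\: [set v | in_pairs (pairs2 S) v].

Definition step3_instr (S : {set Vtx k}) (c : Vtx k) : seq (Vtx k * seq {set Edge k}) :=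
  let a := cellA c in
  [seq ins <- [:: (c_be a, [:: e_t a]); (c_ga a, [:: e_l a]); (c_de a, [:: e_l a; e_b a])]
     | ins.1 \in S].

Definition instr3 S := flatten [seq step3_instr (S2 S) c | c <- blocks].

Definition all_flips S : seq {set Edge k} :=
  flatten [seq step1_flips S c | c <- blocks] ++
  [seq ins.2 | ins <- instr2 S] ++
  flatten [seq ins.2 | ins <- instr3 S].

Definition reduction_output S : {set Edge k} :=
  [set ed : Edge k | odd (count (fun F : {set Edge k} => ed \in F) (all_flips S))].

End Procedure.

Arguments pairs1 k i S : clear implicits.
Arguments pairs2 k i S : clear implicits.
Arguments instr3 k i S : clear implicits.
Arguments reduction_output k i S : clear implicits.

(* Main.v *)
Require Import Defs.
From mathcomp Require Import all_boot all_algebra.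
From mathcomp Require Import ring zify.
Set Implicit Arguments. Unset Strict Implicit. Unset Printing Implicit Defensive.
Import GRing.Theory.
Local Open Scope ring_scope.


Section Arith.
Variables (k i : nat).
Hypothesis hik : (1 <= i <= k)%N.

Local Notation G := ('Z_(2^k)).
Local Notation h := (hh k i).

Lemma h_pos : (0 < h)%N.
Proof. by rewrite /hh expn_gt0. Qed.

Lemma pow_split : (2 ^ k = 2 ^ i * h)%N.
Proof. case/andP: hik => _ le; by rewrite /hh -expnD subnKC. Qed.

Lemma two_i_even : odd (2 ^ i) = false.
Proof. case/andP: hik; case: i => // j _ _; by rewrite expnS oddM. Qed.

Lemma hlt : (h < 2 ^ k)%N.
Proof.
rewrite pow_split -{1}[h]mul1n ltn_pmul2r ?h_pos //.
case/andP: hik; case: i => // j _ _; by rewrite expnS (leq_trans _ (leq_pmulr _ _)) // expn_gt0.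
Qed.

Lemma Zcast : (Zp_trunc (2 ^ k)).+2 = (2 ^ k)%N.
Proof. apply: Zp_cast; exact: leq_ltn_trans (h_pos) hlt. Qed.

Lemma val_add (x y : G) : val (x + y) = ((val x + val y) %% 2 ^ k)%N.
Proof. rewrite [LHS]/=; congr (_ %% _)%N; exact: Zcast. Qed.

Lemma val_nat n : val (n%:R : G) = (n %% 2 ^ k)%N.
Proof. rewrite Zp_nat /=; congr (_ %% _)%N; exact: Zcast. Qed.

Definition HHv : G := (h%:R).

Lemma val_HH : val HHv = h.
Proof. by rewrite val_nat modn_small // hlt. Qed.

Definition ppar (x : G) : bool := odd (val x %/ h).

Lemma ppar_add (x : G) : ppar (x + HHv) = ~~ ppar x.
Proof.
rewrite /ppar val_add val_HH.
have P a : odd (((a + h) %% 2^k) %/ h) = ~~ odd (a %/ h).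
  rewrite pow_split divn_modl ?dvdn_mull //.
  by rewrite mulnK ?h_pos // odd_mod ?two_i_even // divnDr // divnn h_pos addn1 /=.
exact: P.
Qed.

Lemma ppar_sub (x : G) : ppar (x - HHv) = ~~ ppar x.
Proof. by rewrite -{2}(subrK HHv x) ppar_add negbK. Qed.

Lemma dvd_mod a n d : (d %| n)%N -> (d %| a %% n)%N = (d %| a)%N.
Proof. move=> dn; by rewrite {2}(divn_eq a n) dvdn_addr // dvdn_mull. Qed.

Definition Dhh (x : G) : bool := (h %| val x)%N.

Lemma Dh_add (x : G) : Dhh (x + HHv) = Dhh x.
Proof.
rewrite /Dhh val_add val_HH.
have P a : (h %| (a + h) %% 2^k)%N = (h %| a)%N.
  by rewrite dvd_mod ?dvdn_addl // pow_split dvdn_mull.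
exact: P.
Qed.

Lemma Dh_sub (x : G) : Dhh (x - HHv) = Dhh x.
Proof. by rewrite -{2}(subrK HHv x) Dh_add. Qed.

Lemma Vset_char j (v : Vtx k) : (j <= k)%N ->
  (v \in Vset k j) = (hh k j %| val v.1)%N && (hh k j %| val v.2)%N.
Proof.
move=> jk.
have hd : (hh k j %| 2 ^ k)%N by rewrite /hh dvdn_exp2l // leq_subr.
apply/imset2P/andP.
- case=> a b _ _ ->; by rewrite /= !val_nat !dvd_mod // !dvdn_mull.
- case=> d1 d2.
  have lt1 : (val v.1 %/ hh k j < 2 ^ k)%N.
    by rewrite (leq_ltn_trans (leq_div _ _)) // -[X in (_ < X)%N]Zcast ltn_ord.
  have lt2 : (val v.2 %/ hh k j < 2 ^ k)%N.
    by rewrite (leq_ltn_trans (leq_div _ _)) // -[X in (_ < X)%N]Zcast ltn_ord.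
  exists (Ordinal lt1) (Ordinal lt2) => //=.
  rewrite !divnK //.
  case: v d1 d2 {lt1 lt2} => x y _ _ /=. congr pair; apply: val_inj; 
    by rewrite val_nat modn_small // -[X in (_ < X)%N]Zcast ltn_ord.
Qed.

Lemma hh_pred : hh k (i - 1) = (2 * h)%N.
Proof.
case/andP: hik => i1 ik; rewrite /hh -expnS; congr (2 ^ _)%N.
by rewrite subnBA // addn1 subSn.
Qed.

Lemma Vi_char (v : Vtx k) : (v \in Vset k i) = Dhh v.1 && Dhh v.2.
Proof. by rewrite Vset_char //; case/andP: hik. Qed.

Lemma Vi1_char (v : Vtx k) :
  (v \in Vset k (i - 1)) = [&& Dhh v.1, Dhh v.2, ~~ ppar v.1 & ~~ ppar v.2].
Proof.
rewrite Vset_char ?(leq_trans (leq_subr _ _)) //; last by case/andP: hik.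
rewrite hh_pred /Dhh /ppar.
have E (a : nat) : (2 * h %| a)%N = (h %| a)%N && ~~ odd (a %/ h).
  apply/idP/andP.
  - move=> d; have d1 : (h %| a)%N by apply: dvdn_trans d; rewrite dvdn_mull.
    split=> //; move: d; rewrite -{1}(divnK d1) dvdn_pmul2r ?h_pos //.
    by rewrite dvdn2.
  - case=> d1 ev; rewrite -(divnK d1) dvdn_pmul2r ?h_pos // dvdn2 //.
by rewrite !E; case: (_ %| _)%N; case: (_ %| _)%N; case: odd; case: odd.
Qed.

End Arith.


Lemma card_xor (T : finType) (p q : pred T) :
  odd #|[set x | p x (+) q x]| = odd #|[set x | p x]| (+) odd #|[set x | q x]|.
Proof.
set P := [set x | p x]; set Q := [set x | q x].
have -> : [set x | p x (+) q x] = (P :|: Q) :\: (P :&: Q).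
  by apply/setP=> x; rewrite !inE; case: (p x); case: (q x).
rewrite cardsDS ?subIset ?subsetUl //.
have U := cardsUI P Q.
have le1 : (#|P :&: Q| <= #|P :|: Q|)%N by rewrite subset_leq_card // subIset ?subsetUl.
have -> : (#|P :|: Q| - #|P :&: Q| = #|P| + #|Q| - (#|P :&: Q|).*2)%N.
  rewrite -addnn; lia.
have le2 : ((#|P :&: Q|).*2 <= #|P| + #|Q|)%N by rewrite -addnn; lia.
by rewrite -oddD -{2}(subnK le2) oddD odd_double addbF.
Qed.

Section Sig.
Variable k : nat.
Hypothesis k1 : (1 <= k)%N.
Local Notation G := ('Z_(2^k)).

Lemma two_k : (1 < 2 ^ k)%N.
Proof. by case: k k1 => // n _; rewrite expnS (leq_trans _ (leq_pmulr _ _)) // expn_gt0. Qed.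

Lemma sig_xor (A B : {set Edge k}) v :
  v \in sigma [set ed | (ed \in A) (+) (ed \in B)] = (v \in sigma A) (+) (v \in sigma B).
Proof.
rewrite !inE -card_xor; apply: congr1; apply: eq_card => ed; rewrite !inE.
by case: (ed \in A); case: (ed \in B); case: incident.
Qed.

Lemma sig0 v : v \in sigma (set0 : {set Edge k}) = false.
Proof.
rewrite inE; have -> : [set ed in (set0 : {set Edge k}) | incident v ed] = set0.
  by apply/setP=> ed; rewrite !inE.
by rewrite cards0.
Qed.

Lemma sig_out (L : seq {set Edge k}) (v : Vtx k) :
  v \in sigma [set ed : Edge k | odd (count (fun F : {set Edge k} => ed \in F) L)] =
  odd (count (fun F => v \in sigma F) L).
Proof.
elim: L => [|F L IH] /=.
  have -> : [set ed : Edge k | odd 0] = set0 by apply/setP=> ed; rewrite !inE.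
  by rewrite sig0.
have -> : [set ed : Edge k | odd ((ed \in F) + count (fun F0 : {set Edge k} => ed \in F0) L)] =
  [set ed : Edge k | (ed \in F) (+) (ed \in [set ed : Edge k | odd (count (fun F : {set Edge k} => ed \in F) L)])].
  by apply/setP=> ed; rewrite !inE oddD oddb.
by rewrite sig_xor IH oddD oddb.
Qed.

Lemma one_neq0 : (1 : G) != 0.
Proof. by rewrite oner_eq0. Qed.

Lemma sig_edge (e : Edge k) v : e.1 != ends2 e ->
  v \in sigma [set e] = (e.1 == v) (+) (ends2 e == v).
Proof.
move=> ne; rewrite inE.
case I : (incident v e).
- have -> : [set ed in [set e] | incident v ed] = [set e].
    by apply/setP=> ed; rewrite !inE; case: eqP => // ->; rewrite I.
  rewrite cards1 /=; move: I; rewrite /incident.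
  case: eqP => [<-|] /=; first by rewrite eq_sym (negbTE ne).
  by move=> _ ->.
- have -> : [set ed in [set e] | incident v ed] = set0.
    by apply/setP=> ed; rewrite !inE; case: eqP => // ->; rewrite I.
  rewrite cards0 /=; move: I; rewrite /incident.
  by case: eqP => //=; case: eqP.
Qed.

Lemma off_add (p : Vtx k) a b c d : off (off p a b) c d = off p (a + c) (b + d).
Proof. by rewrite /off /= !intrD !addrA. Qed.

Lemma off0 (p : Vtx k) : off p 0 0 = p.
Proof. by case: p => x y; rewrite /off /= !addr0. Qed.

Lemma natZ_inj (j j' : nat) : (j < 2 ^ k)%N -> (j' < 2 ^ k)%N ->
  (j%:R : G) = j'%:R -> j = j'.
Proof.
move=> lj lj' /(congr1 val).
have C : (Zp_trunc (2 ^ k)).+2 = (2 ^ k)%N by apply: Zp_cast; exact: two_k.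
rewrite !Zp_nat /=.
have P a : (a %% (Zp_trunc (2 ^ k)).+2 = a %% 2 ^ k)%N by rewrite C.
by rewrite !P !modn_small.
Qed.

Lemma hpath_mem (p : Vtx k) n ed :
  ed \in hpath p n = [exists j : 'I_n, ed == (off p (j : nat)%:Z 0, false)].
Proof.
apply/imsetP/existsP => [[j _ ->]|[j /eqP ->]]; first by exists j.
by exists j.
Qed.

Lemma vpath_mem (p : Vtx k) n ed :
  ed \in vpath p n = [exists j : 'I_n, ed == (off p 0 (j : nat)%:Z, true)].
Proof.
apply/imsetP/existsP => [[j _ ->]|[j /eqP ->]]; first by exists j.
by exists j.
Qed.

Lemma hpath_S (p : Vtx k) n : (n < 2 ^ k)%N ->
  hpath p n.+1 = [set ed | (ed \in hpath p n) (+) (ed \in [set (off p n%:Z 0, false)])].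
Proof.
move=> ltn; apply/setP=> ed; rewrite !inE !hpath_mem.
case: eqP => [->|ne] /=.
- rewrite addbT; transitivity true; first by apply/existsP; exists ord_max.
  apply/esym/negP => /existsP [j /eqP E].
  move: (congr1 (fun e : Edge k => e.1.1) E); rewrite /off /=.
  move/addrI/(natZ_inj ltn (ltn_trans (ltn_ord j) ltn)) => E2.
  by move: (ltn_ord j); rewrite -E2 ltnn.
- rewrite addbF; apply/existsP/existsP => [[j /eqP E]|[j /eqP E]].
  + have jn : (j < n)%N.
      by rewrite ltn_neqAle -ltnS ltn_ord andbT; apply/eqP=> jn; apply: ne; rewrite E jn.
    by exists (Ordinal jn); rewrite E.
  + by exists (widen_ord (leqnSn n) j); rewrite E.
Qed.

Lemma vpath_S (p : Vtx k) n : (n < 2 ^ k)%N ->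
  vpath p n.+1 = [set ed | (ed \in vpath p n) (+) (ed \in [set (off p 0 n%:Z, true)])].
Proof.
move=> ltn; apply/setP=> ed; rewrite !inE !vpath_mem.
case: eqP => [->|ne] /=.
- rewrite addbT; transitivity true; first by apply/existsP; exists ord_max.
  apply/esym/negP => /existsP [j /eqP E].
  move: (congr1 (fun e : Edge k => e.1.2) E); rewrite /off /=.
  move/addrI/(natZ_inj ltn (ltn_trans (ltn_ord j) ltn)) => E2.
  by move: (ltn_ord j); rewrite -E2 ltnn.
- rewrite addbF; apply/existsP/existsP => [[j /eqP E]|[j /eqP E]].
  + have jn : (j < n)%N.
      by rewrite ltn_neqAle -ltnS ltn_ord andbT; apply/eqP=> jn; apply: ne; rewrite E jn.
    by exists (Ordinal jn); rewrite E.
  + by exists (widen_ord (leqnSn n) j); rewrite E.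
Qed.

Lemma hpath0 (p : Vtx k) : hpath p 0 = set0.
Proof. by apply/setP=> ed; rewrite hpath_mem inE; apply/existsP=> [[[]]]. Qed.
Lemma vpath0 (p : Vtx k) : vpath p 0 = set0.
Proof. by apply/setP=> ed; rewrite vpath_mem inE; apply/existsP=> [[[]]]. Qed.

Lemma sig_hpath (p : Vtx k) n v : (n <= 2 ^ k)%N ->
  v \in sigma (hpath p n) = (p == v) (+) (off p n%:Z 0 == v).
Proof.
elim: n => [|n IH] ltn.
  by rewrite hpath0 sig0 off0 addbb.
rewrite hpath_S // sig_xor (IH (ltnW ltn)) sig_edge; last first.
  rewrite /ends2 /=; apply/eqP => /(congr1 fst); rewrite /off /=.
  move=> E; have : (1 : G) == 0 by rewrite -[1](addKr (p.1 + n%:~R)) -E addNr.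
  by rewrite (negbTE one_neq0).
rewrite /ends2 /= off_add addr0 -addbA; congr addb; rewrite addKb.
by rewrite -PoszD addn1.
Qed.
Lemma sig_vpath (p : Vtx k) n v : (n <= 2 ^ k)%N ->
  v \in sigma (vpath p n) = (p == v) (+) (off p 0 n%:Z == v).
Proof.
elim: n => [|n IH] ltn.
  by rewrite vpath0 sig0 off0 addbb.
rewrite vpath_S // sig_xor (IH (ltnW ltn)) sig_edge; last first.
  rewrite /ends2 /=; apply/eqP => /(congr1 snd); rewrite /off /=.
  move=> E; have : (1 : G) == 0 by rewrite -[1](addKr (p.2 + n%:~R)) -E addNr.
  by rewrite (negbTE one_neq0).
rewrite /ends2 /= off_add addr0 -addbA; congr addb; rewrite addKb.
by rewrite -PoszD addn1.
Qed.

End Sig.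


Definition ent (T : eqType) (ps : seq (T * T)) (v : T) : nat :=
  (count (fun p => p.1 == v) ps + count (fun p => p.2 == v) ps)%N.

Lemma ent_cat (T : eqType) (s1 s2 : seq (T * T)) v :
  ent (s1 ++ s2) v = (ent s1 v + ent s2 v)%N.
Proof. rewrite /ent !count_cat; lia. Qed.

Lemma ent_flatten (T U : eqType) (f : U -> seq (T * T)) (s : seq U) v :
  ent (flatten [seq f c | c <- s]) v = (\sum_(c <- s) ent (f c) v)%N.
Proof.
elim: s => [|c s IH] /=; first by rewrite big_nil.
by rewrite ent_cat IH big_cons.
Qed.

Lemma big_pick (U : eqType) (s : seq U) (f : U -> nat) d : uniq s ->
  (\sum_(c <- s) f c * (c == d) = (d \in s) * f d)%N.
Proof.
elim: s => [|c s IH] /=; first by move=> _; rewrite big_nil.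
case/andP=> cs us; rewrite big_cons IH // inE eq_sym.
case: eqP => [->|_] /=; last by rewrite muln0.
by rewrite (negbTE cs) muln1 mul1n addn0.
Qed.

Lemma odd_le1 n : (n <= 1)%N -> odd n = (0 < n)%N.
Proof. by case: n => [|[]]. Qed.

Lemma in_pairs_ent k (ps : seq (Vtx k * Vtx k)) v :
  in_pairs ps v = (0 < ent ps v)%N.
Proof.
rewrite /in_pairs /ent.
have -> : has (fun p : Vtx k * Vtx k => (p.1 == v) || (p.2 == v)) ps =
          has (fun p => p.1 == v) ps || has (fun p => p.2 == v) ps.
  by elim: ps => //= p ps ->; case: (_ == v); case: (_ == v); case: has; case: has.
by rewrite !has_count addn_gt0.
Qed.

Lemma count2 (T : eqType) (a : pred T) (s : seq T) x y :
  x \in s -> y \in s -> x != y -> a x -> a y -> (1 < count a s)%N.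
Proof.
elim: s => //= z s IH; rewrite !inE => /orP[/eqP xz|xs] /orP[/eqP yz|ys] nxy ax ay.
- by move: nxy; rewrite xz yz eqxx.
- have : (0 < count a s)%N by rewrite -has_count; apply/hasP; exists y.
  by rewrite -xz ax.
- have : (0 < count a s)%N by rewrite -has_count; apply/hasP; exists x.
  by rewrite -yz ay.
- have := IH xs ys nxy ax ay; lia.
Qed.

Lemma count1 (T : eqType) (a : pred T) (s : seq T) x :
  x \in s -> a x -> (0 < count a s)%N.
Proof. by move=> xs ax; rewrite -has_count; apply/hasP; exists x. Qed.

Lemma ent_paired_gen (T : finType) (ps : seq (T * T)) u :
  (ent ps u <= 1)%N -> (#|[set v | ((u, v) \in ps) || ((v, u) \in ps)]| <= 1)%N.
Proof.
move=> le; apply/card_le1_eqP => v v'; rewrite !inE => HH1 HH2; apply/esym; move: HH1 HH2.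
suff P : forall v v', ((u, v) \in ps) -> (((u, v') \in ps) || ((v', u) \in ps)) -> v = v'.
  case/orP=> [H1|H1] /orP[H2|H2].
  - by apply: P H1 _; rewrite H2.
  - by apply: P H1 _; rewrite H2 orbT.
  - by apply/esym; apply: P H2 _; rewrite H1 orbT.
  - have Q : forall w w', ((w, u) \in ps) -> ((w', u) \in ps) -> w = w'.
      move=> w w' A B; apply/eqP; apply/negPn/negP => ne.
      have ne' : (w, u) != (w', u) by rewrite xpair_eqE negb_and ne.
      have := count2 (a := fun p : T * T => p.2 == u) A B ne'.
      rewrite /= eqxx => /(_ isT isT); move: le; rewrite /ent => L G; by rewrite ltnNge (leq_trans (leq_addl _ _) L) in G.
    exact: Q H1 H2.
move=> w w' A /orP[B|B].
- apply/eqP; apply/negPn/negP => ne.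
  have ne' : (u, w) != (u, w') by rewrite xpair_eqE negb_and ne orbT.
  have := count2 (a := fun p : T * T => p.1 == u) A B ne'.
  rewrite /= eqxx => /(_ isT isT); move: le; rewrite /ent => L G.
  by rewrite ltnNge (leq_trans (leq_addr _ _) L) in G.
- have := count1 (a := fun p : T * T => p.1 == u) A.
  have := count1 (a := fun p : T * T => p.2 == u) B.
  rewrite /= eqxx => /(_ isT) C1 /(_ isT) C2; move: le; rewrite /ent => L.
  by have := leq_trans (leq_add C2 C1) L.
Qed.

Lemma ent_paired k (ps : seq (Vtx k * Vtx k)) u :
  (ent ps u <= 1)%N -> (#|[set v | paired_in ps u v]| <= 1)%N.
Proof. exact: ent_paired_gen. Qed.


Arguments e_t : simpl never.
Arguments e_b : simpl never.
Arguments e_l : simpl never.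
Arguments e_r : simpl never.
Arguments sigma : simpl never.

Lemma ent_if (T : eqType) (b : bool) (p : T * T) v :
  ent (if b then [:: p] else [::]) v = (b * ((p.1 == v) + (p.2 == v)))%N.
Proof. by case: b; rewrite /ent /= ?addn0 ?mul1n. Qed.

Lemma off_eqE k (c v : Vtx k) a b : (off c a b == v) = (c == off v (- a) (- b)).
Proof.
apply/eqP/eqP => [<-|->]; rewrite off_add ?subrr ?addNr; by rewrite off0.
Qed.

Section Main.
Variables (k i : nat).
Hypothesis hik : (1 <= i <= k)%N.
Variable S : {set Vtx k}.
Hypothesis HS : S \subset Vset k i.

Local Notation G := ('Z_(2^k)).
Local Notation HH := (@HHv k i).
Local Notation pi := (@ppar k i).
Local Notation Dh := (@Dhh k i).

Lemma hzE : (((hh k i)%:Z)%:~R : G) = HH. Proof. by []. Qed.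
Lemma z0 : ((0:int)%:~R : G) = 0. Proof. by []. Qed.
Let piA := @ppar_add k i hik.
Let piS := @ppar_sub k i hik.
Let DhA := @Dh_add k i hik.
Let DhS := @Dh_sub k i hik.

Lemma memB c : (c \in blocks k i) = [&& Dh c.1, Dh c.2, ~~ pi c.1 & ~~ pi c.2].
Proof. by rewrite mem_enum (Vi1_char hik). Qed.

Lemma uniqB : uniq (blocks k i).
Proof. exact: enum_uniq. Qed.

Ltac nrm := rewrite ?(intrD, intrN, hzE, z0, opprD, opprK, addrA, addr0, oppr0).

Local Notation hz := ((hh k i)%:Z).
Ltac veq := unfold c_al, c_be, c_ga, c_de, cellD, cellA, cellB, cellC, off; simpl; nrm; congr (_, _); ring.
Ltac blk D1 D2 E1 E2 := rewrite memB /off /=; nrm; rewrite ?piA ?piS ?DhA ?DhS ?negbK;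
  by rewrite ?D1 ?D2 ?E1 ?E2.

Lemma ent1 v : (ent (pairs1 k i S) v <= 1)%N.
Proof.
rewrite /pairs1 ent_flatten.
under eq_bigr => c _ do rewrite /step1_pairs /= ent_cat !ent_if /= /c_al /c_be /c_ga /c_de /cellD /= !off_add !off_eqE !mulnDr.
rewrite !big_split /= !big_pick ?uniqB //.
rewrite !memB /off /=; nrm; rewrite ?piA ?piS ?DhA ?DhS.
case: (pi v.1); case: (pi v.2) => /=; rewrite ?andbF ?mul0n ?add0n ?addn0 ?mulnb.
all: exact: leq_b1.
Qed.

Lemma le1_of (b1 b2 : bool) : (b1 -> b2 -> False) -> (b1 + b2 <= 1)%N.
Proof. by case: b1; case: b2 => // /(_ isT isT). Qed.

Lemma S1_ad c x y : c \in blocks k i -> x = c_al (cellD i c) -> y = c_de i (cellD i c) ->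
  x \in S1 i S -> y \in S1 i S -> False.
Proof.
move=> cB -> -> /setDP [xS /negP xn] /setDP [yS _]; apply: xn; rewrite inE.
apply/hasP; exists (c_al (cellD i c), c_de i (cellD i c)); last by rewrite eqxx.
apply/flattenP; exists (step1_pairs i S c); first by apply/mapP; exists c.
by rewrite /step1_pairs /= xS yS mem_head.
Qed.

Lemma S1_bg c x y : c \in blocks k i -> x = c_be i (cellD i c) -> y = c_ga i (cellD i c) ->
  x \in S1 i S -> y \in S1 i S -> False.
Proof.
move=> cB -> -> /setDP [xS /negP xn] /setDP [yS _]; apply: xn; rewrite inE.
apply/hasP; exists (c_be i (cellD i c), c_ga i (cellD i c)); last by rewrite eqxx.
apply/flattenP; exists (step1_pairs i S c); first by apply/mapP; exists c.
by rewrite /step1_pairs /= xS yS mem_cat orbC mem_head.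
Qed.

Lemma ent_mapfilter (T U : eqType) (P : pred ((T * T) * U)) (l : seq ((T * T) * U)) v :
  ent [seq x.1 | x <- filter P l] v = sumn [seq (P x * ((x.1.1 == v) + (x.1.2 == v)))%N | x <- l].
Proof.
elim: l => //= x l <-; case: (P x) => /=; rewrite /ent /= ?mul0n ?add0n //.
rewrite mul1n; lia.
Qed.

Lemma ent2 v : (ent (pairs2 k i S) v <= 1)%N.
Proof.
rewrite /pairs2 /instr2 map_flatten -map_comp ent_flatten.
under eq_bigr => c _ do rewrite /= ent_mapfilter /= /c_al /c_be /c_ga /c_de /cellC /cellB /= !off_add !off_eqE !mulnDr !addn0.
rewrite !big_split /= !big_pick ?uniqB //.
rewrite !memB /off /=; nrm; rewrite ?piA ?piS ?DhA ?DhS.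
case E1: (pi v.1); case E2: (pi v.2) => /=; rewrite ?andbF ?andbT ?mul0n ?add0n ?addn0 ?mulnb;
  apply: le1_of => /and3P[/andP[D1 D2] M1 M2] /and3P[_ M3 M4].
- apply: (S1_bg (c := off v (- hz) hz)) M4 M2; [blk D1 D2 E1 E2 | veq | veq].
- apply: (S1_ad (c := off v (- hz) (hz + hz))) M1 M4; [blk D1 D2 E1 E2 | veq | veq].
- apply: (S1_ad (c := off v (- (hz + hz)) hz)) M3 M2; [blk D1 D2 E1 E2 | veq | veq].
- apply: (S1_bg (c := off v (- (hz + hz)) (hz + hz))) M1 M3; [blk D1 D2 E1 E2 | veq | veq].
Qed.
Lemma count_filter1 (T U : eqType) (A : pred T) (l : seq (T * U)) v :
  count (fun x => x.1 == v) (filter (fun x => x.1 \in A) l) =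
  sumn [seq ((x.1 \in A) * (x.1 == v))%N | x <- l].
Proof. by elim: l => //= x l <-; case: (x.1 \in A) => /=; rewrite ?mul1n ?mul0n. Qed.

Lemma S1_sub v : v \in S1 i S -> v \in S.
Proof. by case/setDP. Qed.
Lemma S2_sub v : v \in S2 i S -> v \in S1 i S.
Proof. by case/setDP. Qed.
Lemma S_Vi v : v \in S -> Dh v.1 && Dh v.2.
Proof. by move/(subsetP HS); rewrite (Vi_char hik). Qed.

Lemma cnt3_eq v : count (fun ins => ins.1 == v) (instr3 k i S) =
  (\sum_(c <- blocks k i) (((c_be i (cellA c)) \in S2 i S) * (c == off v (- hz) 0)
     + ((c_ga i (cellA c)) \in S2 i S) * (c == off v 0 hz)
     + ((c_de i (cellA c)) \in S2 i S) * (c == off v (- hz) hz)))%N.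
Proof.
rewrite /instr3 count_flatten sumnE !big_map.
apply: eq_bigr => c _; rewrite /step3_instr count_filter1 /= addn0 addnA.
by rewrite /c_be /c_ga /c_de /cellA /= !off_eqE ?oppr0 ?opprK.
Qed.
Lemma cnt3_le1 v : (count (fun ins => ins.1 == v) (instr3 k i S) <= 1)%N.
Proof.
rewrite cnt3_eq !big_split /= !big_pick ?uniqB //.
rewrite !memB /off /=; nrm; rewrite ?piA ?piS ?DhA ?DhS.
case: (pi v.1); case: (pi v.2) => /=; rewrite ?andbF ?mul0n ?add0n ?addn0 ?mulnb.
all: by rewrite ?leq_b1.
Qed.

Lemma cnt3_pos (x y : G) : (x, y) \notin Vset k (i - 1) ->
  (0 < count (fun ins => ins.1 == (x, y)) (instr3 k i S))%N = ((x, y) \in S2 i S).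
Proof.
rewrite (Vi1_char hik) /= => nV.
have HV : (x, y) \in S2 i S -> Dh x && Dh y := fun H => S_Vi (S1_sub (S2_sub H)).
rewrite cnt3_eq !big_split /= !big_pick ?uniqB //.
unfold c_be, c_ga, c_de, cellA; rewrite !memB /off /=; nrm.
rewrite ?piA ?piS ?DhA ?DhS ?negbK ?subrK ?addrK.
case Dx: (Dh x) nV HV; case Dy: (Dh y) => //= nV HV;
  move: nV HV; case: (pi x); case: (pi y); case: ((x, y) \in S2 i S) => //=;
  by move=> _ /(_ isT).
Qed.
Lemma k1 : (1 <= k)%N.
Proof. by case/andP: hik => /leq_trans H /H. Qed.
Lemma hle : (hh k i <= 2 ^ k)%N.
Proof. exact: ltnW (hlt hik). Qed.

Lemma sig_et (a v : Vtx k) : v \in sigma (e_t i a) = (c_al a == v) (+) (c_be i a == v).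
Proof. by rewrite /e_t (sig_hpath k1 _ _ hle). Qed.
Lemma sig_eb (a v : Vtx k) : v \in sigma (e_b i a) = (c_ga i a == v) (+) (c_de i a == v).
Proof. by rewrite /e_b (sig_hpath k1 _ _ hle) /c_ga /c_de /= off_add add0r addr0. Qed.
Lemma sig_el (a v : Vtx k) : v \in sigma (e_l i a) = (c_ga i a == v) (+) (c_al a == v).
Proof. by rewrite /e_l (sig_vpath k1 _ _ hle) /c_ga /c_al /= off_add addr0 addNr off0. Qed.
Lemma sig_er (a v : Vtx k) : v \in sigma (e_r i a) = (c_de i a == v) (+) (c_be i a == v).
Proof. by rewrite /e_r (sig_vpath k1 _ _ hle) /c_be /c_de /= off_add addr0 addNr. Qed.

Ltac xcase := repeat match goal with |- context [?a == ?b] => case: (a == b) end.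

Lemma par1_block c v : odd (count (fun F => v \in sigma F) (step1_flips i S c)) =
  odd (ent (step1_pairs i S c) v).
Proof.
rewrite /step1_flips /step1_pairs /=.
case: (_ \in S); case: (_ \in S); case: (_ \in S); case: (_ \in S) => /=;
rewrite /ent /= ?sig_eb ?sig_er ?sig_el ?sig_et ?oddD ?oddb /=; by xcase.
Qed.

Lemma in_pairs_mem (ps : seq (Vtx k * Vtx k)) v (Q : pred (Vtx k)) :
  (forall p, p \in ps -> Q p.1 && Q p.2) -> in_pairs ps v -> Q v.
Proof.
move=> H /hasP [p /H /andP [q1 q2] /orP [] /eqP <-] //.
Qed.

Lemma pairs1_S p : p \in pairs1 k i S -> (p.1 \in S) && (p.2 \in S).
Proof.
move=> /flattenP [l /mapP [c _ ->]]; rewrite /step1_pairs /= mem_cat.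
case: ifP => [/andP[a b]|_]; case: ifP => [/andP[a' b']|_]; rewrite ?inE ?orbF //=.
- by case/orP => /eqP -> /=; apply/andP.
- by move/eqP => -> /=; apply/andP.
- by move/eqP => -> /=; apply/andP.
Qed.

Lemma pairs2_S1 p : p \in pairs2 k i S -> (p.1 \in S1 i S) && (p.2 \in S1 i S).
Proof.
move=> /mapP [x /flattenP [l /mapP [c _ ->] xl] ->]; move: xl.
by rewrite /step2_instr mem_filter => /andP [].
Qed.

Lemma odd_flat (A : eqType) (B : Type) (s : seq A) (F : A -> seq B) (p : pred B) (G : A -> nat) :
  (forall c, c \in s -> odd (count p (F c)) = odd (G c)) ->
  odd (count p (flatten [seq F c | c <- s])) = odd (\sum_(c <- s) G c).
Proof.
elim: s => [|c s IH] H /=; first by rewrite big_nil.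
by rewrite count_cat big_cons !oddD H ?mem_head // IH // => c' c's; apply: H; rewrite inE c's orbT.
Qed.

Lemma ent_cons (T : eqType) (p : T * T) ps v :
  ent (p :: ps) v = ((p.1 == v) + (p.2 == v) + ent ps v)%N.
Proof. by rewrite /ent /= addnACA. Qed.

Lemma par_pairs (T U : eqType) (f : pred U) (L : seq ((T * T) * U)) v :
  (forall x, x \in L -> f x.2 = (x.1.1 == v) (+) (x.1.2 == v)) ->
  odd (count f [seq x.2 | x <- L]) = odd (ent [seq x.1 | x <- L] v).
Proof.
elim: L => [|x L IH] H //=.
have IH' : odd (count f [seq x.2 | x <- L]) = odd (ent [seq x.1 | x <- L] v).
  by apply: IH => y yL; apply: H; rewrite inE yL orbT.
rewrite ent_cons H ?mem_head //; move: (ent _ v) IH' => e IH'.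
by rewrite !oddD !oddb IH'.
Qed.

Lemma par_shift (T U : eqType) (f : pred U) (L : seq (T * seq U)) v :
  (forall x, x \in L -> odd (count f x.2) = (x.1 == v)) ->
  odd (count f (flatten [seq x.2 | x <- L])) = odd (count (fun x => x.1 == v) L).
Proof.
elim: L => [|x L IH] H //=.
have IH' : odd (count f (flatten [seq x.2 | x <- L])) = odd (count (fun x => x.1 == v) L).
  by apply: IH => y yL; apply: H; rewrite inE yL orbT.
rewrite count_cat; move: (count f (flatten _)) IH' => e IH'.
by rewrite oddD H ?mem_head // IH' oddD oddb.
Qed.

Lemma par1 v : odd (count (fun F => v \in sigma F) (flatten [seq step1_flips i S c | c <- blocks k i])) =
  odd (ent (pairs1 k i S) v).
Proof. by rewrite /pairs1 ent_flatten; apply: odd_flat => c _; exact: par1_block. Qed.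

Lemma par2 v : odd (count (fun F => v \in sigma F) [seq ins.2 | ins <- instr2 i S]) =
  odd (ent (pairs2 k i S) v).
Proof.
apply: par_pairs => x /flattenP [l /mapP [c _ ->]].
rewrite /step2_instr mem_filter => /andP [_]; rewrite !in_cons in_nil orbF.
case/orP => [/eqP -> /=|/orP [/eqP -> /=|/orP [/eqP -> /=|/eqP -> /=]]].
- by rewrite sig_el addbC.
- by rewrite sig_er addbC.
- by rewrite sig_et.
- by rewrite sig_eb.
Qed.

Lemma par3 v : v \notin Vset k (i - 1) ->
  odd (count (fun F => v \in sigma F) (flatten [seq ins.2 | ins <- instr3 k i S])) =
  odd (count (fun ins => ins.1 == v) (instr3 k i S)).
Proof.
move=> nV; apply: par_shift => x /flattenP [l /mapP [c cB ->]].
have cv : (c == v) = false.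
  by apply/negbTE; apply: contraNneq nV => <-; rewrite -(mem_enum (mem (Vset k (i - 1)))).
rewrite /step3_instr mem_filter => /andP [_]; rewrite !in_cons in_nil orbF.
case/orP => [/eqP -> /=|/orP [/eqP -> /=|/eqP -> /=]].
- by rewrite addn0 oddb sig_et /c_al /cellA cv.
- by rewrite addn0 oddb sig_el /c_al /cellA cv addbF.
- rewrite addn0 oddD !oddb sig_el sig_eb /c_al /cellA cv addbF.
  by case: (_ == v); case: (_ == v).
Qed.

Lemma final v : v \notin Vset k (i - 1) ->
  (v \in S) (+) (v \in sigma (reduction_output k i S)) = false.
Proof.
move=> nV.
rewrite /reduction_output sig_out /all_flips !count_cat !oddD par1 par2 par3 //.
rewrite (odd_le1 (ent1 v)) (odd_le1 (ent2 v)) -!in_pairs_ent.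
have Q1 := in_pairs_mem (Q := mem S) pairs1_S (v := v).
have Q2 := in_pairs_mem (Q := mem (S1 i S)) pairs2_S1 (v := v).
case: v nV Q1 Q2 => x y nV Q1 Q2.
rewrite (odd_le1 (cnt3_le1 _)) cnt3_pos //.
move: Q1 Q2; rewrite /S2 /S1 !inE /=.
case: (in_pairs (pairs1 k i S) (x, y)); case: (in_pairs (pairs2 k i S) (x, y));
  case: ((x, y) \in S) => //=.
all: try by move=> /(_ isT).
all: try by move=> _ /(_ isT).
Qed.
End Main.

Local Close Scope ring_scope.

Theorem proposition1 (k i : nat) (S : {set Vtx k}) :
  (1 <= i <= k)%N -> S \subset Vset k i ->
  (forall u : Vtx k, #|[set v | paired_in (pairs1 k i S) u v]| <= 1)%N /\
  (forall u : Vtx k, #|[set v | paired_in (pairs2 k i S) u v]| <= 1)%N /\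
  (forall v : Vtx k, count (fun ins => ins.1 == v) (instr3 k i S) <= 1)%N /\
  symd S (sigma (reduction_output k i S)) \subset Vset k (i - 1).
Proof.
move=> hik HS; split; [|split; [|split]].
- by move=> u; apply: ent_paired; apply: ent1.
- by move=> u; apply: ent_paired; apply: ent2.
- by move=> v; apply: cnt3_le1.
- apply/subsetP => v; apply: contraLR => nV.
  have := final hik HS nV; rewrite /symd in_setU !in_setD.
  by case: (v \in S); case: (v \in sigma _).
Qed.
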